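(* Let $p$ be a prime. The group $X_{\{p\}}$ is a uniserial $\langle s\rangle$-module: for every integer $j\ge 0$ it has a unique $\langle s\rangle$-submodule of order $p^j$, namely $X_{p^j}=X\cap\ker\gamma^j$ (with $X_{1}=1$), and for $j\ge1$ this submodule is generated as an $\langle s\rangle$-module by $x_{p^j}$.
   Context: $s$ is the permutation matrix of the $p$-cycle $(1,2,\ldots,p)$ (permutations $\alpha$ correspond to matrices $[\delta_{i\alpha,j}]_{i,j}$), acting on the diagonal group $\mathrm{D}(p,\mathbb{C})$ by conjugation, $d^s=s^{-1}ds$; the action is extended to the integral group ring written exponentially and multiplicatively, e.g. $d^{1-s}=d\,(d^s)^{-1}$. $X=\mathrm{SL}(p,\mathbb{C})\cap\mathrm{D}(p,\mathbb{C})$, and $X_{\{p\}}$ is the subgroup of elements of $X$ of $p$-power order. $\gamma$ is the endomorphism $\gamma(d)=d^{1-s}$ of $\mathrm{D}(p,\mathbb{C})$. For $m\ge1$ let $b_m=\mathrm{diag}(e^{2\pi i/m},e^{-2\pi i/m},1,\ldots,1)$. For a positive integer $j$ write $j=n(p-1)-m$ with $n,m$ non-negative integers and $m<p-1$, and set $x_{p^j}=\gamma^m(b_{p^n})$. *)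

(* Defs.v *)
From HB Require Import structures.
From mathcomp Require Import all_boot all_order all_algebra all_fingroup.
From mathcomp Require Import complex.
From mathcomp Require Import Rstruct.
From Stdlib Require Rdefinitions Rtrigo_def Rtrigo1.
Set Implicit Arguments. Unset Strict Implicit. Unset Printing Implicit Defensive.
Import Order.TTheory GRing.Theory Num.Theory.
Local Open Scope ring_scope.

Notation CC := (complex Rdefinitions.R).

Definition expi (m : nat) : CC :=
  Complex (Rtrigo_def.cos (2 * Rtrigo1.PI / m%:R)) (Rtrigo_def.sin (2 * Rtrigo1.PI / m%:R)).

(* the p-cycle (1,2,...,p) on 'I_p : i |-> i+1 mod p *)
Definition pcycle (p : nat) : 'S_p := perm (@ordS_inj p).

(* s = permutation matrix [delta_{i alpha, j}]; mathcomp's perm_mx s i j = (s i == j) *)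
Definition smx (p : nat) : 'M[CC]_p := perm_mx (pcycle p).

Definition conjs (p : nat) (d : 'M[CC]_p) : 'M[CC]_p :=
  invmx (smx p) *m d *m smx p.

Definition inD (p : nat) (d : 'M[CC]_p) : Prop := is_diag_mx d /\ d \in unitmx.

Definition inX (p : nat) (d : 'M[CC]_p) : Prop := inD d /\ \det d = 1.

Definition inXp (p : nat) (d : 'M[CC]_p) : Prop :=
  inX d /\ exists k : nat, d ^+ (p ^ k)%N = 1%:M.

Definition gamma (p : nat) (d : 'M[CC]_p) : 'M[CC]_p := d *m invmx (conjs d).

Definition Xpj (p j : nat) (d : 'M[CC]_p) : Prop :=
  inX d /\ iter j (@gamma p) d = 1%:M.

Definition bmx (p m : nat) : 'M[CC]_p :=
  diag_mx (\row_(i < p) if nat_of_ord i == 0%N then expi m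
                        else if nat_of_ord i == 1%N then (expi m)^-1 else 1).

(* for j >= 1, j = n(p-1) - m with 0 <= m < p-1 *)
Definition nj (p j : nat) : nat := ((j + (p - 2)) %/ (p - 1))%N.
Definition mj (p j : nat) : nat := (nj p j * (p - 1) - j)%N.

Definition xpj (p j : nat) : 'M[CC]_p := iter (mj p j) (@gamma p) (bmx p (p ^ nj p j)).

Definition smodule (p : nat) (A : 'M[CC]_p -> Prop) : Prop :=
  (forall d, A d -> inXp d) /\
  A 1%:M /\
  (forall d e, A d -> A e -> A (d *m e)) /\
  (forall d, A d -> A (invmx d)) /\
  (forall d, A d -> A (conjs d)) /\
  (forall d, A d -> A (smx p *m d *m invmx (smx p))).

Definition has_order (T : eqType) (A : T -> Prop) (n : nat) : Prop :=
  exists l : seq T, [/\ uniq l, size l = n & forall x, A x <-> x \in l].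

Definition sgen (p : nat) (x : 'M[CC]_p) (d : 'M[CC]_p) : Prop :=
  forall A, smodule A -> A x -> A d.

Arguments Xpj p j d : clear implicits.
Arguments xpj p j : clear implicits.
Arguments bmx p m : clear implicits.
Arguments smx p : clear implicits.

(* Main.v *)
From Stdlib Require Import Reals Classical.
Require Import Defs.
From mathcomp Require Import all_boot all_order all_algebra all_fingroup.
From mathcomp Require Import complex Rstruct ring lra zify.
From Stdlib Require Import FunctionalExtensionality.
Set Implicit Arguments. Unset Strict Implicit. Unset Printing Implicit Defensive.
Import Order.TTheory GRing.Theory Num.Theory.
Local Open Scope ring_scope.

Definition E (t : R) : CC := Complex (cos t) (sin t).
Arguments E t%_ring_scope.

Lemma EM a b : E a * E b = E (a + b).
Proof.
rewrite /E cos_plus sin_plus. rewrite /GRing.mul /=.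
by rewrite !RealsE; congr Complex; rewrite addrC.
Qed.

Lemma E0 : E 0 = 1.
Proof. rewrite /E; have -> : (GRing.zero : R) = IZR 0 by []. by rewrite cos_0 sin_0 !RealsE. Qed.

Lemma EX t n : E t ^+ n = E (n%:R * t).
Proof.
elim: n => [|n IH].
    by rewrite expr0 mul0r E0.
by rewrite exprS IH EM mulrSr mulrDl mul1r addrC.
Qed.

Lemma E2pi : E (2 * PI) = 1.
Proof.
have -> : (2 * PI = Rmult (IZR 2) PI) by rewrite RmultE; congr (_ * _); rewrite !RealsE.
by rewrite /E cos_2PI sin_2PI !RealsE.
Qed.

Lemma expiE (m : nat) : expi m = E (2 * PI / m%:R).
Proof. by []. Qed.

Lemma expi_pow (m : nat) : (0 < m)%N -> expi m ^+ m = 1.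
Proof.
move=> m0; rewrite expiE EX -E2pi; congr E.
have : (m%:R : R) != 0 by rewrite pnatr_eq0 -lt0n.
move=> h; field; exact: h.
Qed.

Lemma expi_powp (p n : nat) : (0 < p)%N -> expi (p ^ n.+1) ^+ p = expi (p ^ n).
Proof.
move=> p0; rewrite !expiE EX; congr E.
have : (p%:R : R) != 0 by rewrite pnatr_eq0 -lt0n.
move=> h; rewrite expnS natrM; field; rewrite natrX expf_neq0 //.
Qed.

Lemma expi_neq1 (m : nat) : (1 < m)%N -> expi m != 1.
Proof.
move=> m1; apply/eqP => /(congr1 (@complex.Re _)) /=.
have hpi : (0 < PI) by have := PI_RGT_0; rewrite RealsE => /RltP.
have hm : 2%:R <= m%:R :> R by rewrite (ler_nat _ 2 m).
have hm0 : 0 < m%:R :> R by rewrite ltr0n; apply: ltn_trans m1.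
set x := 2 * PI / m%:R.
have h1 : 0 < x by apply: divr_gt0 => //; lra.
have h2 : x <= PI.
  by rewrite /x ler_pdivrMr //; nra.
have H := cos_decreasing_1 (IZR 0) x.
rewrite cos_0 in H => /eqP; apply/negP; rewrite lt_eqF //.
apply/RltP; apply: H.
- exact: Rle_refl.
- by apply/RleP; rewrite RealsE; apply: ltW.
- by apply/RleP; rewrite RealsE; apply: ltW.
- by apply/RleP.
- by apply/RltP; rewrite RealsE.
Qed.

Definition qq (p : nat) : {perm 'I_p} := (pcycle p)^-1.
Definition dg (p : nat) (a : 'I_p -> CC) : 'M[CC]_p := diag_mx (\row_i a i).
Definition Gf (p : nat) (a : 'I_p -> CC) : 'I_p -> CC := fun i => a i / a (qq p i).
Definition onef (p : nat) : 'I_p -> CC := fun _ => 1.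
Arguments onef p : clear implicits.
Definition fm (p : nat) (a b : 'I_p -> CC) : 'I_p -> CC := fun i => a i * b i.
Definition fv (p : nat) (a : 'I_p -> CC) : 'I_p -> CC := fun i => (a i)^-1.
Definition fx (p : nat) (a : 'I_p -> CC) (n : nat) : 'I_p -> CC := fun i => a i ^+ n.
Definition XF (p k : nat) (a : 'I_p -> CC) := \prod_i a i = 1 /\ iter k (@Gf p) a = onef p.
Arguments XF p k a : clear implicits.

Lemma dg_inj p (a b : 'I_p -> CC) : dg a = dg b -> a = b.
Proof.
move=> /matrixP h; apply: functional_extensionality => i.
by have := h i i; rewrite !mxE !eqxx !mulr1n.
Qed.

Lemma dgM p (a b : 'I_p -> CC) : dg a *m dg b = dg (fm a b).
Proof. by rewrite /dg mulmx_diag; congr diag_mx; apply/rowP => i; rewrite !mxE. Qed.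

Lemma dg1 p : dg (onef p) = 1%:M.
Proof. by apply/matrixP => i j; rewrite !mxE. Qed.

Lemma dgX p (a : 'I_p -> CC) n : dg a ^+ n = dg (fx a n).
Proof.
elim: n => [|n IH].
  rewrite expr0; transitivity (1%:M : 'M[CC]_p) => //; rewrite -dg1; congr dg; apply: functional_extensionality => i; by rewrite /fx expr0.
rewrite exprS IH. rewrite [_ * _]dgM. congr dg; apply: functional_extensionality => i.
by rewrite /fm /fx exprS.
Qed.

Lemma fnz_prod p (a : 'I_p -> CC) : \prod_i a i != 0 -> forall i, a i != 0.
Proof. by move=> h i; apply: contraNneq h => ai0; rewrite (bigD1 i) //= ai0 mul0r. Qed.

Lemma dgV p (a : 'I_p -> CC) : (forall i, a i != 0) -> invmx (dg a) = dg (fv a).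
Proof.
move=> nz.
have h : dg a *m dg (fv a) = 1%:M.
  rewrite dgM -dg1; congr dg; apply: functional_extensionality => i.
  by rewrite /fm /fv mulfV.
have [ua _] := mulmx1_unit h.
by rewrite -[RHS]mul1mx -(mulVmx ua) -mulmxA h mulmx1.
Qed.

Lemma det_dg p (a : 'I_p -> CC) : \det (dg a) = \prod_i a i.
Proof. by rewrite det_diag; apply: eq_bigr => i _; rewrite mxE. Qed.

Lemma diag_dg p (d : 'M[CC]_p) : is_diag_mx d -> d = dg (fun i => d i i).
Proof.
move=> /is_diag_mxP h; apply/matrixP => i j; rewrite !mxE.
case: (eqVneq i j) => [-> | ne]; first by rewrite mulr1n.
by rewrite mulr0n h.
Qed.

Lemma perm_mx_inv p (s : {perm 'I_p}) : invmx (perm_mx s : 'M[CC]_p) = perm_mx s^-1.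
Proof.
have h : (perm_mx s : 'M[CC]_p) *m perm_mx s^-1 = 1%:M by rewrite -perm_mxM mulgV perm_mx1.
have [ua _] := mulmx1_unit h.
by rewrite -[RHS]mul1mx -(mulVmx ua) -mulmxA h mulmx1.
Qed.

Lemma conjs_dg p (a : 'I_p -> CC) : conjs (dg a) = dg (fun i => a (qq p i)).
Proof.
have e : perm_mx (pcycle p) = perm_mx ((pcycle p)^-1)^-1 :> 'M[CC]_p by rewrite invgK.
rewrite /conjs /smx perm_mx_inv -row_permE [X in _ *m X]e -col_permE.
apply/matrixP => i j; rewrite !mxE /qq.
by rewrite (inj_eq perm_inj).
Qed.

Lemma sconj_dg p (a : 'I_p -> CC) : smx p *m dg a *m invmx (smx p) = dg (fun i => a (pcycle p i)).
Proof.
rewrite /smx perm_mx_inv -row_permE -col_permE.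
apply/matrixP => i j; rewrite !mxE.
by rewrite (inj_eq perm_inj).
Qed.

Lemma fext p (a b : 'I_p -> CC) : (forall i, a i = b i) -> a = b.
Proof. exact: functional_extensionality. Qed.

Lemma Gf_nz p (a : 'I_p -> CC) : (forall i, a i != 0) -> forall i, Gf a i != 0.
Proof. by move=> nz i; rewrite /Gf mulf_neq0 ?invr_eq0. Qed.

Lemma iterG_nz p k (a : 'I_p -> CC) : (forall i, a i != 0) -> forall i, iter k (@Gf p) a i != 0.
Proof. by elim: k => [|k IH] //= nz; apply: Gf_nz; apply: IH. Qed.

Lemma gamma_dg p (a : 'I_p -> CC) : (forall i, a i != 0) -> gamma (dg a) = dg (Gf a).
Proof.
move=> nz; rewrite /gamma conjs_dg dgV; last by move=> i; apply: nz.
by rewrite dgM.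
Qed.

Lemma iter_gamma_dg p k (a : 'I_p -> CC) : (forall i, a i != 0) ->
  iter k (@gamma p) (dg a) = dg (iter k (@Gf p) a).
Proof.
move=> nz; elim: k => [|k IH] //=.
by rewrite IH gamma_dg //; apply: iterG_nz.
Qed.

Lemma Gf_mul p (a b : 'I_p -> CC) : Gf (fm a b) = fm (Gf a) (Gf b).
Proof. by apply: fext => i; rewrite /Gf /fm invfM mulrACA. Qed.

Lemma Gf_inv p (a : 'I_p -> CC) : Gf (fv a) = fv (Gf a).
Proof. by apply: fext => i; rewrite /Gf /fv invfM invrK. Qed.

Lemma Gf_pow p (a : 'I_p -> CC) n : Gf (fx a n) = fx (Gf a) n.
Proof. by apply: fext => i; rewrite /Gf /fx exprMn exprVn. Qed.

Lemma Gf_one p : Gf (onef p) = onef p.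
Proof. by apply: fext => i; rewrite /Gf /onef invr1 mulr1. Qed.

Lemma iterG_mul p k (a b : 'I_p -> CC) : iter k (@Gf p) (fm a b) = fm (iter k (@Gf p) a) (iter k (@Gf p) b).
Proof. by elim: k => [|k IH] //=; rewrite IH Gf_mul. Qed.

Lemma iterG_inv p k (a : 'I_p -> CC) : iter k (@Gf p) (fv a) = fv (iter k (@Gf p) a).
Proof. by elim: k => [|k IH] //=; rewrite IH Gf_inv. Qed.

Lemma iterG_pow p k (a : 'I_p -> CC) n : iter k (@Gf p) (fx a n) = fx (iter k (@Gf p) a) n.
Proof. by elim: k => [|k IH] //=; rewrite IH Gf_pow. Qed.

Lemma iterG_one p k : iter k (@Gf p) (onef p) = onef p.
Proof. by elim: k => [|k IH] //=; rewrite IH Gf_one. Qed.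

Lemma Gf_comp p (pi : {perm 'I_p}) (a : 'I_p -> CC) : (forall i, qq p (pi i) = pi (qq p i)) ->
  Gf (fun i => a (pi i)) = (fun i => Gf a (pi i)).
Proof. by move=> h; apply: fext => i; rewrite /Gf h. Qed.

Lemma iterG_comp p k (pi : {perm 'I_p}) (a : 'I_p -> CC) : (forall i, qq p (pi i) = pi (qq p i)) ->
  iter k (@Gf p) (fun i => a (pi i)) = (fun i => iter k (@Gf p) a (pi i)).
Proof. by move=> h; elim: k => [|k IH] //=; rewrite IH Gf_comp. Qed.

Lemma qq_comm_q p i : qq p (qq p i) = qq p (qq p i).
Proof. by []. Qed.

Lemma qq_comm_s p i : qq p (pcycle p i) = pcycle p (qq p i).
Proof. by rewrite /qq permK permKV. Qed.

Lemma prod_comp p (pi : {perm 'I_p}) (a : 'I_p -> CC) : \prod_i a (pi i) = \prod_i a i.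
Proof. by rewrite [RHS](reindex_inj (@perm_inj _ pi)). Qed.

Lemma pcycleE p (i : 'I_p) : pcycle p i = ordS i.
Proof. by rewrite /pcycle permE. Qed.

Lemma const_s p (a : 'I_p -> CC) : (forall i, a (pcycle p i) = a i) -> forall i j, a i = a j.
Proof.
move=> h.
suff H : forall (h0 : (0 < p)%N) n (hn : (n < p)%N), a (Ordinal hn) = a (Ordinal h0).
  move=> i j; have h0 : (0 < p)%N by apply: leq_ltn_trans (ltn_ord i).
  have ei : i = Ordinal (ltn_ord i) by apply: val_inj.
  have ej : j = Ordinal (ltn_ord j) by apply: val_inj.
  by rewrite ei ej !(H h0).
move=> h0; elim=> [|n IH] hn; first by f_equal; apply: val_inj.
have hn' : (n < p)%N by apply: ltnW.
rewrite -(IH hn') -[a (Ordinal hn')]h; f_equal; apply: val_inj.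
by rewrite pcycleE /= modn_small.
Qed.

Lemma G1_const p (a : 'I_p -> CC) : Gf a = onef p -> (forall i, a i != 0) -> forall i j, a i = a j.
Proof.
move=> hG nz; apply: const_s => i.
have := congr1 (fun f => f (pcycle p i)) hG; rewrite /Gf /onef /qq permK.
by move=> e; rewrite -(divfK (nz i) (a (pcycle p i))) e mul1r.
Qed.

Lemma prod_constc p (c : CC) : \prod_(i < p) c = c ^+ p.
Proof. by rewrite prodr_const card_ord. Qed.

Lemma prod1_nz p (a : 'I_p -> CC) : \prod_i a i = 1 -> forall i, a i != 0.
Proof. by move=> h; apply: fnz_prod; rewrite h oner_neq0. Qed.

Lemma prod_Gf p (a : 'I_p -> CC) : \prod_i a i = 1 -> \prod_i Gf a i = 1.
Proof.
move=> h; rewrite /Gf prodf_div.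
by rewrite (prod_comp (qq p) a) h divr1.
Qed.

Lemma prod_iterG p k (a : 'I_p -> CC) : \prod_i a i = 1 -> \prod_i iter k (@Gf p) a i = 1.
Proof. by elim: k => [|k IH] //= h; apply: prod_Gf; apply: IH. Qed.

Lemma XF_Gf p k (a : 'I_p -> CC) : XF p k.+1 a -> XF p k (Gf a).
Proof. by case=> h1 h2; split; [apply: prod_Gf | rewrite -iterSr]. Qed.

Lemma XF1_const p (a : 'I_p -> CC) : \prod_i a i = 1 -> Gf a = onef p ->
  forall i0, a = (fun _ => a i0) /\ a i0 ^+ p = 1.
Proof.
move=> h1 h2 i0.
have hc : a = (fun _ => a i0) by apply: fext => i; apply: (G1_const h2 (prod1_nz h1)).
split=> //; rewrite -prod_constc -[RHS]h1; apply: eq_bigr => i _; by rewrite [in RHS]hc.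
Qed.

Lemma prime_prim p (c : CC) : prime p -> c ^+ p = 1 -> c != 1 -> p.-primitive_root c.
Proof.
move=> hp hc c1.
have [m pm mdvd] := prim_order_exists (prime_gt0 hp) hc.
have := primeP hp => -[_ /(_ m mdvd) /orP[/eqP m1|/eqP mp]]; last by rewrite -mp.
by move: c1; rewrite -[c]expr1 -m1 (prim_expr_order pm) eqxx.
Qed.

Lemma torsion p k (a : 'I_p -> CC) : XF p k a -> fx a (p ^ k) = onef p.
Proof.
elim: k a => [|k IH] a.
  by case=> _ /= ->; apply: fext => i; rewrite /fx /onef expr1n.
move=> h; have [h1 _] := h.
have := IH _ (XF_Gf h); rewrite -Gf_pow => hG.
have hb : \prod_i fx a (p ^ k) i = 1 by rewrite /fx prodrXl h1 expr1n.
apply: fext => i.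
have [hc hcp] := XF1_const hb hG i.
by rewrite /fx expnSr exprM -/(fx a (p ^ k) i) hcp.
Qed.

Lemma qq_val p (i : 'I_p) : val (qq p i) = if val i == 0%N then p.-1 else (val i).-1.
Proof.
have e : pcycle p (qq p i) = i by rewrite /qq permKV.
have := congr1 val e; rewrite pcycleE /=.
set j := qq p i; have jp := ltn_ord j.
case: (ltngtP j.+1 p) => hj.
- rewrite modn_small // => <-; by [].
- by exfalso; lia.
- by rewrite hj modnn => <- /=; lia.
Qed.

Definition Qf p (y : 'I_p -> CC) (i : 'I_p) : CC := \prod_(k < p | (k <= i)%N) y k.
Definition rootc p (y : 'I_p -> CC) : CC := p.-root ((\prod_i Qf y i)^-1).
Definition pre p (y : 'I_p -> CC) : 'I_p -> CC := fun i => rootc y * Qf y i.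

Lemma Qf_nz p (y : 'I_p -> CC) : (forall i, y i != 0) -> forall i, Qf y i != 0.
Proof. by move=> nz i; apply/prodf_neq0 => k _; apply: nz. Qed.

Lemma pre_prod p (y : 'I_p -> CC) : (0 < p)%N -> \prod_i y i = 1 -> \prod_i pre y i = 1.
Proof.
move=> p0 h; have nz := prod1_nz h.
rewrite /pre big_split /= prod_constc /rootc rootCK // mulVf //.
by apply/prodf_neq0 => i _; apply: Qf_nz.
Qed.

Lemma rootc_nz p (y : 'I_p -> CC) : (0 < p)%N -> (forall i, y i != 0) -> rootc y != 0.
Proof.
move=> p0 nz; apply/eqP => r0.
have : rootc y ^+ p = (\prod_i Qf y i)^-1 by rewrite /rootc rootCK.
rewrite r0 expr0n eqn0Ngt p0 /= => /esym /eqP; rewrite invr_eq0.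
by apply/negP/prodf_neq0 => i _; apply: Qf_nz.
Qed.

Lemma pre_G p (y : 'I_p -> CC) : (0 < p)%N -> \prod_i y i = 1 -> Gf (pre y) = y.
Proof.
move=> p0 h; have nz := prod1_nz h.
have r0 := rootc_nz p0 nz.
apply: fext => i; rewrite /Gf /pre invfM mulrACA divff // mul1r.
have hq : nat_of_ord (qq p i) = if nat_of_ord i == 0%N then p.-1 else (nat_of_ord i).-1 := qq_val i.
case: (eqVneq (nat_of_ord i) 0%N) => [i0|i0].
  have e1 : Qf y i = y i.
    rewrite /Qf (bigD1 i) ?i0 //= big1 ?mulr1 // => k /andP[hk ne].
    by move: hk; rewrite leqn0 => /eqP hk; case/eqP: ne; apply: val_inj; rewrite /= hk i0.
  have e2 : Qf y (qq p i) = 1.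
    rewrite -h /Qf; apply: eq_bigl => k; rewrite hq i0 /=.
    by rewrite -ltnS prednK // ltn_ord.
  by rewrite e1 e2 invr1 mulr1.
rewrite /Qf (bigD1 i) //= -mulrA.
have -> : \prod_(k < p | ((k <= i)%N && (k != i))) y k = Qf y (qq p i).
  apply: eq_bigl => k; rewrite hq (negPf i0).
  rewrite -[(k <= (nat_of_ord i).-1)%N]ltnS prednK ?lt0n //.
  by rewrite ltn_neqAle andbC; congr andb.
by rewrite mulfV ?mulr1 //; apply: Qf_nz.
Qed.

Lemma dg_diag p (b : 'I_p -> CC) : (fun j => dg b j j) = b.
Proof. by apply: fext => j; rewrite /dg !mxE eqxx mulr1n. Qed.

Lemma inX_dg p (d : 'M[CC]_p) : inX d <-> exists a, d = dg a /\ \prod_i a i = 1.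
Proof.
split.
  case=> [[hd hu] hdet]; exists (fun i => d i i); split; first exact: diag_dg.
  by rewrite -det_dg -diag_dg.
case=> a [-> ha]; split; last by rewrite det_dg.
split; first exact: diag_mx_is_diag.
by rewrite unitmxE det_dg ha unitr1.
Qed.

Lemma Xpj_dg p k (d : 'M[CC]_p) : Xpj p k d <-> exists a, d = dg a /\ XF p k a.
Proof.
split.
  case=> /inX_dg [a [-> ha]] hk; exists a; split => //; split => //.
  apply: dg_inj; rewrite dg1 -hk iter_gamma_dg //; exact: prod1_nz.
case=> a [-> [ha hk]]; split; first by apply/inX_dg; exists a.
by rewrite iter_gamma_dg ?hk ?dg1 //; exact: prod1_nz.
Qed.

Definition roots p : seq CC := [seq expi p ^+ r | r <- iota 0 p].

Lemma zeta_prim p : prime p -> p.-primitive_root (expi p).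
Proof.
move=> hp; apply: prime_prim => //; first by apply: expi_pow; exact: prime_gt0.
by apply: expi_neq1; exact: prime_gt1.
Qed.

Lemma roots_uniq p : prime p -> uniq (roots p).
Proof.
move=> hp; rewrite map_inj_in_uniq ?iota_uniq // => i j; rewrite !mem_iota /= !add0n => hi hj.
by move/eqP; rewrite (eq_prim_root_expr (zeta_prim hp)) !modn_small // => /eqP.
Qed.

Lemma roots_mem p (c : CC) : prime p -> (c ^+ p = 1 <-> c \in roots p).
Proof.
move=> hp; split.
  move=> hc; have [i ->] := prim_rootP (zeta_prim hp) hc.
  by apply: map_f; rewrite mem_iota add0n ltn_ord.
case/mapP => r _ ->; rewrite -exprM mulnC exprM expi_pow ?expr1n //; exact: prime_gt0.
Qed.

Fixpoint Lk p (k : nat) : seq 'M[CC]_p :=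
  if k is k'.+1 then
    [seq dg (fun i => c * pre (fun j => y j j) i) | y : 'M[CC]_p <- Lk p k', c <- roots p]
  else [:: 1%:M].

Lemma Gf_scal p (c : CC) (a : 'I_p -> CC) : c != 0 -> Gf (fun i => c * a i) = Gf a.
Proof.
move=> c0; rewrite (_ : (fun i => c * a i) = fm (fun _ => c) a) // Gf_mul.
by apply: fext => i; rewrite /fm /Gf divff ?mul1r.
Qed.

Lemma roots_nz p (c : CC) : prime p -> c \in roots p -> c != 0.
Proof.
move=> hp /(roots_mem c hp) hc; apply/eqP => c0; move: hc; rewrite c0 expr0n.
by rewrite eqn0Ngt prime_gt0 //= => /eqP; rewrite eq_sym oner_eq0.
Qed.

Lemma roots_size p : size (roots p) = p.
Proof. by rewrite size_map size_iota. Qed.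

Lemma pre_nz p (y : 'I_p -> CC) : (0 < p)%N -> \prod_i y i = 1 -> forall i, pre y i != 0.
Proof. by move=> p0 h; apply: prod1_nz; apply: pre_prod. Qed.

Lemma Lk_spec p k : prime p ->
  [/\ uniq (Lk p k), size (Lk p k) = (p ^ k)%N & forall d, Xpj p k d <-> d \in Lk p k].
Proof.
move=> hp; have p0 := prime_gt0 hp.
elim: k => [|k [IHu IHs IHm]].
  split=> // d; rewrite inE; split.
    case=> _ /= -> ; by [].
  move/eqP => ->; split => //; apply/inX_dg; exists (onef p); split; first by rewrite dg1.
  by rewrite /onef prod_constc expr1n.
have memL : forall y, y \in Lk p k -> exists b, y = dg b /\ XF p k b.
  by move=> y /IHm /Xpj_dg.
split.
- apply: allpairs_uniq => //; first exact: roots_uniq.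
  move=> [y1 c1] [y2 c2] /allpairsP [[y1' c1'] /= [hy1 hc1 [e1 e2]]].
  move=> /allpairsP [[y2' c2'] /= [hy2 hc2 [e3 e4]]] /=; subst y1' c1' y2' c2'.
  have [b1 [-> [hb1 _]]] := memL _ hy1.
  have [b2 [-> [hb2 _]]] := memL _ hy2.
  rewrite !dg_diag => /dg_inj he.
  have eb : b1 = b2.
    have := congr1 (@Gf p) he; rewrite (@Gf_scal p c1 (pre b1) (roots_nz hp hc1)) (@Gf_scal p c2 (pre b2) (roots_nz hp hc2)) !pre_G //.
  subst b2; congr pair.
  have i0 : 'I_p := Ordinal p0.
  have := congr1 (fun f => f i0) he => /= /mulIf; apply; exact: pre_nz.
- by rewrite size_allpairs IHs roots_size expnSr. 
move=> d; split.
  case/Xpj_dg => a [-> ha].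
  have hG := XF_Gf ha.
  have hy : dg (Gf a) \in Lk p k by apply/IHm/Xpj_dg; exists (Gf a).
  set b := Gf a.
  set a' := fm a (fv (pre b)).
  have hb1 : \prod_i b i = 1 by case: hG.
  have ha1 : \prod_i a i = 1 by case: ha.
  have hpa : \prod_i a' i = 1.
    by rewrite /a' /fm /fv big_split /= prodfV pre_prod // ha1 invr1 mulr1.
  have hGa : Gf a' = onef p.
    rewrite /a' Gf_mul Gf_inv pre_G //; apply: fext => i; rewrite /fm /fv /onef mulfV //.
    exact: prod1_nz.
  have i0 : 'I_p := Ordinal p0.
  have [ec hc] := XF1_const hpa hGa i0.
  have -> : a = (fun i => a' i0 * pre (fun j => dg b j j) i).
    apply: fext => i; rewrite dg_diag -[a' i0]/((fun _ => a' i0) i) -ec /a' /fm /fv.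
    by rewrite mulfVK //; apply: pre_nz.
  apply: (allpairs_f (fun (y : 'M[CC]_p) c => dg (fun i => c * pre (fun j => y j j) i)) hy).
  exact/roots_mem.
case/allpairsP => [[y c] /= [hy hc ->]].
have [b [-> hb]] := memL _ hy.
rewrite dg_diag; apply/Xpj_dg; eexists; split; first by reflexivity.
have [hb1 hb2] := hb.
split.
  rewrite big_split /= prod_constc pre_prod //.
  by move/(roots_mem c hp): hc => ->; rewrite mul1r.
by rewrite iterSr Gf_scal ?(roots_nz hp) // pre_G.
Qed.

Definition closedB p (B : ('I_p -> CC) -> Prop) :=
  [/\ B (onef p), (forall a b, B a -> B b -> B (fm a b)), (forall a, B a -> B (fv a))
    & (forall a, B a -> B (fun i => a (qq p i)))].

Lemma B_pow p (B : ('I_p -> CC) -> Prop) a n : closedB B -> B a -> B (fx a n).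
Proof.
case=> h1 hM _ _ ha; elim: n => [|n IH].
  by rewrite (_ : fx a 0 = onef p) //; apply: fext => i; rewrite /fx expr0.
rewrite (_ : fx a n.+1 = fm (fx a n) a); first exact: hM.
by apply: fext => i; rewrite /fm /fx exprSr.
Qed.

Lemma B_G p (B : ('I_p -> CC) -> Prop) a : closedB B -> B a -> B (Gf a).
Proof.
case=> h1 hM hV hq ha.
by rewrite (_ : Gf a = fm a (fv (fun i => a (qq p i)))) //; apply: hM => //; apply: hV; apply: hq.
Qed.

Lemma fm_fv_cancel p (b x : 'I_p -> CC) : (forall i, x i != 0) -> fm (fm b (fv x)) x = b.
Proof. by move=> nz; apply: fext => i; rewrite /fm /fv mulfVK. Qed.

Lemma fm_assoc p (a b c : 'I_p -> CC) : fm a (fm b c) = fm (fm a b) c.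
Proof. by apply: fext => i; rewrite /fm mulrA. Qed.

Lemma level_reduce p (hp : prime p) k (a b : 'I_p -> CC) : XF p k.+1 a -> iter k (@Gf p) a <> onef p ->
  XF p k.+1 b -> exists r, XF p k (fm b (fv (fx a r))).
Proof.
have p0 := prime_gt0 hp; have i0 : 'I_p := Ordinal p0.
move=> [ha1 ha2] hne [hb1 hb2].
have anz := prod1_nz ha1.
have [ez hzp] := XF1_const (prod_iterG k ha1) ha2 i0.
have [ew hwp] := XF1_const (prod_iterG k hb1) hb2 i0.
set z := iter k (@Gf p) a in ez hzp hne *; set w := iter k (@Gf p) b in ew hwp *.
have c1 : z i0 != 1 by apply/eqP => e; apply: hne; rewrite ez e.
have [r hr] := prim_rootP (prime_prim hp hzp c1) hwp.
have znz : z i0 != 0.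
  apply/eqP => e; move: hzp; rewrite e expr0n eqn0Ngt p0 /= => /eqP; by rewrite eq_sym oner_eq0.
exists r; split.
  by rewrite /fm /fv big_split /= prodfV /fx prodrXl ha1 hb1 expr1n invr1 mulr1.
rewrite iterG_mul iterG_inv iterG_pow -/z -/w [z]ez [w]ew hr; apply: fext => i.
by rewrite /fm /fv /fx mulfV // expf_neq0.
Qed.

Lemma gen p (hp : prime p) k (a : 'I_p -> CC) : XF p k.+1 a -> iter k (@Gf p) a <> onef p ->
  forall B, closedB B -> B a -> forall b, XF p k.+1 b -> B b.
Proof.
elim: k a => [|k IH] a ha hne B hB hBa b hb.
all: have [r [hr1 hr2]] := level_reduce hp ha hne hb.
all: have anz := prod1_nz (proj1 ha).
all: have xnz : forall i, fx a r i != 0 by move=> i; rewrite /fx expf_neq0.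
all: rewrite -(fm_fv_cancel b xnz); case: (hB) => [h1 hM hV hq]; apply: hM; last by apply: B_pow.
- by move: hr2 => /= ->.
- apply: (IH (Gf a)) => //.
  + exact: XF_Gf.
  + by rewrite -iterSr.
  + exact: B_G.
Qed.

Definition Gp p (a : 'I_p -> CC) : 'I_p -> CC := fun i => a i * a (qq p i) ^+ p.-1.

Lemma inv_tors (p : nat) (x : CC) : (0 < p)%N -> x ^+ p = 1 -> x^-1 = x ^+ p.-1.
Proof.
move=> p0 hx.
have x0 : x != 0 by apply/eqP => e; move: hx; rewrite e expr0n eqn0Ngt p0 /= => /eqP; rewrite eq_sym oner_eq0.
apply: (mulfI x0); rewrite mulfV // -exprS prednK //.
Qed.

Lemma tors_Gf p (a : 'I_p -> CC) : (0 < p)%N -> fx a p = onef p -> Gf a = Gp a.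
Proof.
move=> p0 h; apply: fext => i; rewrite /Gf /Gp (inv_tors p0) //.
by have := congr1 (fun f => f (qq p i)) h.
Qed.

Lemma tors_Gp p (a : 'I_p -> CC) : fx a p = onef p -> fx (Gp a) p = onef p.
Proof.
move=> h; apply: fext => i; rewrite /fx /Gp exprMn -exprM mulnC exprM.
have e : forall j, a j ^+ p = 1 by move=> j; have := congr1 (fun f => f j) h.
by rewrite !e expr1n mulr1.
Qed.

Lemma iter_tors p k (a : 'I_p -> CC) : (0 < p)%N -> fx a p = onef p -> iter k (@Gf p) a = iter k (@Gp p) a.
Proof.
move=> p0 h; elim: k => [|k IH] //=.
rewrite IH tors_Gf //.
elim: k {IH} => [|k IH] //=; exact: tors_Gp.
Qed.

Lemma iterGp_formula p k (a : 'I_p -> CC) i :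
  iter k (@Gp p) a i = \prod_(t < k.+1) a (iter t (qq p) i) ^+ ('C(k, t) * p.-1 ^ t).
Proof.
elim: k i => [|k IH] i.
  by rewrite big_ord_recl big_ord0 /= mulr1 mul1n expr1.
rewrite [LHS]/= /Gp !IH.
rewrite [in RHS]big_ord_recl /= bin0 mul1n expr1.
rewrite [X in _ = _ * X](eq_bigr (fun t : 'I_k.+1 =>
   a (iter t.+1 (qq p) i) ^+ ('C(k, t.+1) * p.-1 ^ t.+1) *
   a (iter t.+1 (qq p) i) ^+ ('C(k, t) * p.-1 ^ t * p.-1))); last first.
  move=> t _; rewrite /bump /= binS -exprD; congr (_ ^+ _).
  by rewrite add1n mulnDl -mulnA -expnSr.
rewrite big_split /= mulrA; congr (_ * _).
  rewrite big_ord_recl /= bin0 mul1n expr1; congr (_ * _).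
  rewrite [RHS]big_ord_recr /= bin_small // mul0n expr0 mulr1.
  by apply: eq_bigr => t _.
rewrite -prodrXl; apply: eq_bigr => t _.
by rewrite -exprM -iterSr.
Qed.

Lemma binom_mod p t : prime p -> (t < p)%N -> ('C(p.-1, t) * p.-1 ^ t = 1 %[mod p])%N.
Proof.
move=> hp; have p0 := prime_gt0 hp.
elim: t => [|t IH] ht; first by rewrite bin0 expn0.
have IH' := IH (ltnW ht).
have hd : (p %| 'C(p, t.+1))%N := @prime_dvd_bin t.+1 p hp ht.
have e : 'C(p, t.+1) = ('C(p.-1, t.+1) + 'C(p.-1, t))%N by rewrite -{1}(prednK p0) binS.
have h0 : ('C(p.-1, t.+1) * p.-1 ^ t.+1 + 'C(p.-1, t) * p.-1 ^ t * p.-1 = 0 %[mod p])%N.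
  rewrite -mulnA -expnSr -mulnDl -e mod0n; apply/eqP; rewrite -/(dvdn _ _).
  exact: dvdn_mulr.
move: h0; rewrite -modnDmr -modnMml IH' modnMml modnDmr mul1n.
set B := ('C(p.-1, t.+1) * p.-1 ^ t.+1)%N => h0.
have h1 : (B + p.-1 = 1 + p.-1 %[mod p])%N by rewrite h0 add1n prednK // modnn mod0n.
by move/eqP: h1; rewrite eqn_modDr => /eqP.
Qed.

Lemma iter_sq p t (i : 'I_p) : iter t (pcycle p) (iter t (qq p) i) = i.
Proof.
elim: t i => [|t IH] i //.
by rewrite iterSr /= /qq permKV IH.
Qed.

Lemma iter_s_val p t (i : 'I_p) : val (iter t (pcycle p) i) = ((i + t) %% p)%N.
Proof.
elim: t => [|t IH] /=; first by rewrite addn0 modn_small.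
by rewrite pcycleE /= IH -addn1 modnDml addn1 addnS.
Qed.

Lemma iter_q_inj p (i : 'I_p) : injective (fun t : 'I_p => iter t (qq p) i).
Proof.
suff H : forall t t' : 'I_p, (t < t')%N -> iter t (qq p) i <> iter t' (qq p) i.
  move=> t t' /= e; apply: val_inj; case: (ltngtP t t') => h //.
    by case: (H _ _ h e).
  by case: (H _ _ h (esym e)).
move=> t t' h e.
have := congr1 (iter t (pcycle p)) e; rewrite iter_sq.
rewrite -(subnKC (ltnW h)) iterD.
rewrite iter_sq => e2.
have := congr1 (fun j => iter (t' - t) (pcycle p) j) e2; rewrite iter_sq /= => /(congr1 val).
rewrite iter_s_val => e3.
have : ((i + (t' - t)) == i + 0 %[mod p])%N by rewrite addn0 e3 modn_small.
rewrite eqn_modDl mod0n modn_small; last by apply: leq_ltn_trans (leq_subr _ _) (ltn_ord t').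
by rewrite subn_eq0 leqNgt h.
Qed.

Lemma Gp_full p (a : 'I_p -> CC) (hp : prime p) : fx a p = onef p ->
  forall i, iter p.-1 (@Gp p) a i = \prod_j a j.
Proof.
move=> h i; have p0 := prime_gt0 hp.
have e : forall j, a j ^+ p = 1 by move=> j; have := congr1 (fun f => f j) h.
rewrite iterGp_formula prednK //.
rewrite (eq_bigr (fun t : 'I_p => a (iter t (qq p) i))); last first.
  move=> t _; rewrite -(expr_mod _ (e _)) binom_mod ?modn_small ?expr1 ?prime_gt1 //.
by rewrite [RHS](reindex_inj (@iter_q_inj p i)).
Qed.

Lemma E1 p (hp : prime p) (a : 'I_p -> CC) : fx a p = onef p -> \prod_i a i = 1 ->
  iter p.-1 (@Gf p) a = onef p.
Proof.
move=> h1 h2; rewrite iter_tors ?prime_gt0 //; apply: fext => i.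
by rewrite Gp_full.
Qed.

Definition bfun p (m : nat) : 'I_p -> CC := fun i =>
  if nat_of_ord i == 0%N then expi m else if nat_of_ord i == 1%N then (expi m)^-1 else 1.

Arguments bfun p m : clear implicits.

Lemma bmx_dg p m : bmx p m = dg (bfun p m).
Proof. by []. Qed.

Lemma expi_nz (m : nat) : (0 < m)%N -> expi m != 0.
Proof.
move=> m0; apply/eqP => e; have := expi_pow m0; rewrite e expr0n eqn0Ngt m0 /=.
by move/eqP; rewrite eq_sym oner_eq0.
Qed.

Lemma ord_of p (n : nat) : (n < p)%N -> {i : 'I_p | nat_of_ord i = n}.
Proof. by move=> h; exists (Ordinal h). Qed.

Lemma prod_bfun p m : (1 < p)%N -> (0 < m)%N -> \prod_i bfun p m i = 1.
Proof.
move=> p1 m0.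
have [i0 e0] := ord_of (ltnW p1).
have [i1 e1] := ord_of p1.
have ne : i1 != i0 by apply/eqP => e; move: e1; rewrite e e0.
rewrite (bigD1 i0) // (bigD1 i1) //= big1 ?mulr1.
  by rewrite /bfun e0 e1 /= mulfV // expi_nz.
move=> i /andP[n0 n1]; rewrite /bfun.
have -> : (nat_of_ord i == 0%N) = false by apply/negP => /eqP e; case/eqP: n0; apply: val_inj; rewrite /= e e0.
have -> : (nat_of_ord i == 1%N) = false by apply/negP => /eqP e; case/eqP: n1; apply: val_inj; rewrite /= e e1.
by [].
Qed.

Lemma bfun_pow p (n : nat) : (0 < p)%N -> fx (bfun p (p ^ n.+1)) p = bfun p (p ^ n).
Proof.
move=> p0; apply: fext => i; rewrite /fx /bfun.
by case: ifP => _; [|case: ifP => _]; rewrite ?exprVn ?expi_powp ?expr1n.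
Qed.

Lemma bfun_tors p : (0 < p)%N -> fx (bfun p p) p = onef p.
Proof.
move=> p0; apply: fext => i; rewrite /fx /bfun /onef.
by case: ifP => _; [|case: ifP => _]; rewrite ?exprVn ?expi_pow ?invr1 ?expr1n.
Qed.

Definition cfun p : 'I_p -> CC := fun i => if nat_of_ord i == 0%N then expi p else 1.

Arguments cfun p : clear implicits.

Lemma E2 p (hp : prime p) : iter p.-2 (@Gf p) (bfun p p) <> onef p.
Proof.
have p0 := prime_gt0 hp; have p1 := prime_gt1 hp.
have ctors : fx (cfun p) p = onef p.
  apply: fext => i; rewrite /fx /cfun /onef; case: ifP => _; by rewrite ?expi_pow ?expr1n.
have hGc : Gp (cfun p) = bfun p p.
  apply: fext => i; rewrite /Gp /cfun /bfun.
  have hq : nat_of_ord (qq p i) = if nat_of_ord i == 0%N then p.-1 else (nat_of_ord i).-1 := qq_val i.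
  rewrite hq; case e: (nat_of_ord i) => [|[|k]] /=.
  - by rewrite -subn1 subn_eq0 leqNgt p1 /= expr1n mulr1.
  - by rewrite mul1r (inv_tors p0) // expi_pow.
  - by rewrite expr1n mulr1.
rewrite iter_tors //; last by rewrite -hGc; apply: tors_Gp.
rewrite -hGc -iterSr.
have -> : (p.-2).+1 = p.-1 by case: p hp p0 p1 {ctors hGc} => [|[|k]].
move/(congr1 (fun f => f (Ordinal p0))); rewrite Gp_full // /onef.
have [i0 e0] := ord_of p0.
rewrite (bigD1 i0) //= big1 ?mulr1.
  by rewrite /cfun e0 /=; apply/eqP; apply: expi_neq1.
move=> i n0; rewrite /cfun.
have -> : (nat_of_ord i == 0%N) = false by apply/negP => /eqP e; case/eqP: n0; apply: val_inj; rewrite /= e e0.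
by [].
Qed.

Lemma closed_tors p : closedB (fun a : 'I_p -> CC => fx a p = onef p /\ \prod_i a i = 1).
Proof.
split.
- split; first by apply: fext => i; rewrite /fx /onef expr1n.
  by rewrite /onef prod_constc expr1n.
- move=> a b [ha1 ha2] [hb1 hb2]; split.
    apply: fext => i; rewrite /fx /fm exprMn.
    by have := congr1 (fun f => f i) ha1; have := congr1 (fun f => f i) hb1; rewrite /fx /onef => -> ->; rewrite mulr1.
  by rewrite /fm big_split /= ha2 hb2 mulr1.
- move=> a [ha1 ha2]; split.
    apply: fext => i; rewrite /fx /fv exprVn.
    by have := congr1 (fun f => f i) ha1; rewrite /fx /onef => ->; rewrite invr1.
  by rewrite /fv prodfV ha2 invr1.
- move=> a [ha1 ha2]; split.
    by apply: fext => i; have := congr1 (fun f => f (qq p i)) ha1.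
  by rewrite (prod_comp (qq p) a).
Qed.

Lemma H1 p (hp : prime p) (a : 'I_p -> CC) : XF p p.-1 a -> fx a p = onef p.
Proof.
have p0 := prime_gt0 hp; have p1 := prime_gt1 hp.
have e : p.-1 = (p.-2).+1 by lia.
move=> ha.
have hb1 : \prod_i bfun p p i = 1 by apply: prod_bfun.
have hb : XF p (p.-2).+1 (bfun p p) by split => //; rewrite -e E1 // bfun_tors.
have hB : fx (bfun p p) p = onef p /\ \prod_i bfun p p i = 1 by split => //; apply: bfun_tors.
have := @gen p hp p.-2 (bfun p p) hb (E2 hp) _ (closed_tors p) hB a.
by rewrite -e => /(_ ha) [].
Qed.

Lemma H2 p (hp : prime p) k (a : 'I_p -> CC) : \prod_i a i = 1 ->
  (iter (k + p.-1) (@Gf p) a = onef p <-> iter k (@Gf p) (fx a p) = onef p).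
Proof.
move=> ha; rewrite iterG_pow addnC iterD.
have hz := prod_iterG k ha.
split.
  by move=> h; apply: H1 => //; split.
by move=> h; apply: E1.
Qed.

Lemma F7 p (hp : prime p) m (a : 'I_p -> CC) : \prod_i a i = 1 -> fx a (p ^ m) = onef p ->
  iter (m * p.-1) (@Gf p) a = onef p.
Proof.
elim: m a => [|m IH] a ha.
  by rewrite expn0 /= => <-; apply: fext => i; rewrite /fx expr1.
move=> h; rewrite mulSnr.
apply/(H2 hp _ ha); apply: IH.
  by rewrite /fx prodrXl ha expr1n.
by rewrite -h; apply: fext => i; rewrite /fx -exprM expnS.
Qed.

Lemma F8 p (hp : prime p) n :
  iter (n.+1 * p.-1) (@Gf p) (bfun p (p ^ n.+1)) = onef p /\
  iter (n.+1 * p.-1).-1 (@Gf p) (bfun p (p ^ n.+1)) <> onef p.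
Proof.
have p0 := prime_gt0 hp; have p1 := prime_gt1 hp.
have pb : forall m, \prod_i bfun p (p ^ m.+1) i = 1.
  by move=> m; apply: prod_bfun; rewrite // expn_gt0 p0.
elim: n => [|n [IH1 IH2]].
  rewrite mul1n expn1; split; first by apply: E1 => //; [apply: bfun_tors | apply: prod_bfun].
  by rewrite -subn1 subn1 -subn2 subn2; apply: E2.
split.
  rewrite mulSnr; apply/(H2 hp _ (pb n.+1)).
  by rewrite bfun_pow.
have pos : (0 < n.+1 * p.-1)%N by rewrite muln_gt0 /= -subn1 subn_gt0.
rewrite mulSnr; move: pos IH2; set x := (n.+1 * p.-1)%N => pos IH2.
have -> : (x + p.-1).-1 = (x.-1 + p.-1)%N by lia.
by move/(H2 hp _ (pb n.+1)); rewrite bfun_pow.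
Qed.

Lemma XF_mono p k m (a : 'I_p -> CC) : XF p k a -> XF p (m + k) a.
Proof. by case=> h1 h2; split => //; rewrite iterD h2 iterG_one. Qed.

Lemma smodule_B p (A : 'M[CC]_p -> Prop) : smodule A -> closedB (fun a => A (dg a)).
Proof.
case=> hX [h1 [hM [hV [hC hS]]]].
split.
- by rewrite dg1.
- by move=> a b ha hb; rewrite -dgM; apply: hM.
- move=> a ha; have [hx _] := hX _ ha; move: hx => /inX_dg [a' [e ha']].
  move/dg_inj: e => e; subst a'.
  by rewrite -dgV; [apply: hV | apply: prod1_nz].
- by move=> a ha; rewrite -conjs_dg; apply: hC.
Qed.

Lemma XF_smodule p (hp : prime p) j : smodule (Xpj p j).
Proof.
split.
  move=> d hd; split; first by case: hd.
  case/Xpj_dg: hd => a [-> ha]; exists j.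
  by rewrite dgX torsion // dg1.
split.
  apply/Xpj_dg; exists (onef p); split; first by rewrite dg1.
  by split; [rewrite /onef prod_constc expr1n | rewrite iterG_one].
split.
  move=> d e /Xpj_dg [a [-> [ha1 ha2]]] /Xpj_dg [b [-> [hb1 hb2]]].
  apply/Xpj_dg; exists (fm a b); split; first by rewrite dgM.
  by split; [rewrite /fm big_split /= ha1 hb1 mulr1 | rewrite iterG_mul ha2 hb2; apply: fext => i; rewrite /fm /onef mulr1].
split.
  move=> d /Xpj_dg [a [-> [ha1 ha2]]].
  apply/Xpj_dg; exists (fv a); split; first by rewrite dgV //; apply: prod1_nz.
  by split; [rewrite /fv prodfV ha1 invr1 | rewrite iterG_inv ha2; apply: fext => i; rewrite /fv /onef invr1].
split.
  move=> d /Xpj_dg [a [-> [ha1 ha2]]].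
  apply/Xpj_dg; exists (fun i => a (qq p i)); split; first by rewrite conjs_dg.
  split; first by rewrite (prod_comp (qq p) a).
  by rewrite (iterG_comp _ _ (@qq_comm_q p)) ha2.
move=> d /Xpj_dg [a [-> [ha1 ha2]]].
apply/Xpj_dg; exists (fun i => a (pcycle p i)); split; first by rewrite sconj_dg.
split; first by rewrite (prod_comp (pcycle p) a).
by rewrite (iterG_comp _ _ (@qq_comm_s p)) ha2.
Qed.

Lemma has_order_unique (T : eqType) (A B : T -> Prop) n m :
  has_order A n -> has_order B m -> (forall x, A x <-> B x) -> n = m.
Proof.
case=> l1 [u1 s1 h1] [l2 [u2 s2 h2]] hAB.
rewrite -s1 -s2; apply: perm_size; apply: uniq_perm => // x.
apply/idP/idP => hx.
  by apply/(h2 x); apply/(hAB x); apply/(h1 x).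
by apply/(h1 x); apply/(hAB x); apply/(h2 x).
Qed.

Lemma inXp_level p (hp : prime p) (d : 'M[CC]_p) : inXp d -> exists k, Xpj p k d.
Proof.
case=> /inX_dg [a [-> ha]] [k hk].
exists (k * p.-1)%N; apply/Xpj_dg; exists a; split => //; split => //.
apply: F7 => //; apply: dg_inj; by rewrite -dgX hk dg1.
Qed.

Lemma list_level p (hp : prime p) (l : seq 'M[CC]_p) :
  (forall d, d \in l -> exists k, Xpj p k d) -> exists K, forall d, d \in l -> Xpj p K d.
Proof.
elim: l => [|x l IH] h; first by exists 0%N.
have [k hk] := h x (mem_head _ _).
have [K hK] : exists K, forall d, d \in l -> Xpj p K d by apply: IH => d hd; apply: h; rewrite inE hd orbT.
exists (k + K)%N => d; rewrite inE => /orP[/eqP ->|hd].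
  case/Xpj_dg: hk => a [-> ha]; apply/Xpj_dg; exists a; split => //.
  by rewrite addnC; apply: XF_mono.
case/Xpj_dg: (hK d hd) => a [-> ha]; apply/Xpj_dg; exists a; split => //.
exact: XF_mono.
Qed.

Lemma unique_level p (hp : prime p) (A : 'M[CC]_p -> Prop) : smodule A ->
  forall K, (forall d, A d -> Xpj p K d) -> exists K', forall d, A d <-> Xpj p K' d.
Proof.
move=> hA; have hB := smodule_B hA.
elim=> [|K IH] hK.
  exists 0%N => d; split; first exact: hK.
  case/Xpj_dg => a [-> [_ /= ->]]; rewrite dg1; by case: hA => _ [].
case: (classic (exists d, A d /\ ~ Xpj p K d)) => [[d [hd hnd]]|hno].
  exists K.+1 => e; split; first exact: hK.
  have [a [ea ha]] := (Xpj_dg _ _).1 (hK d hd).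
  move=> /Xpj_dg [b [-> hb]].
  have hne : iter K (@Gf p) a <> onef p.
    move=> h; apply: hnd; rewrite ea; apply/Xpj_dg; exists a; split => //; split => //; by case: ha.
  apply: (gen hp ha hne hB) => //; by rewrite -ea.
apply: IH => d hd; case: (classic (Xpj p K d)) => // hn.
by case: hno; exists d.
Qed.

Lemma nj_facts p j : (1 < p)%N -> (0 < j)%N -> (0 < nj p j)%N /\ (j <= nj p j * p.-1)%N.
Proof.
move=> p1 j0; rewrite /nj.
have P0 : (0 < p - 1)%N by rewrite subn_gt0.
have hd := divn_eq (j + (p - 2)) (p - 1).
have hr := ltn_pmod (j + (p - 2)) P0.
set q := ((j + (p - 2)) %/ (p - 1))%N in hd *.
set r := ((j + (p - 2)) %% (p - 1))%N in hd hr *.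
have e : p.-1 = (p - 1)%N by rewrite subn1.
rewrite e; set P := (p - 1)%N in hd hr P0 *.
have e2 : (p - 2 = P - 1)%N by rewrite /P; lia.
rewrite e2 in hd.
split.
  rewrite lt0n; apply/eqP => q0; move: hd; rewrite q0 mul0n add0n => hd.
  lia.
lia.
Qed.

Lemma xpj_level p (hp : prime p) j : (0 < j)%N ->
  exists x, xpj p j = dg x /\ XF p j x /\ iter j.-1 (@Gf p) x <> onef p.
Proof.
move=> j0; have p0 := prime_gt0 hp; have p1 := prime_gt1 hp.
have [n0 hle] := nj_facts p1 j0.
set n := nj p j in n0 hle.
have [n' en] : exists n', n = n'.+1 by exists n.-1; rewrite prednK.
have [F1 F2] := F8 hp n'.
rewrite -en in F1 F2.
set b := bfun p (p ^ n).
have hb1 : \prod_i b i = 1 by apply: prod_bfun; rewrite // expn_gt0 p0.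
have em : mj p j = (n * p.-1 - j)%N by rewrite /mj subn1.
exists (iter (mj p j) (@Gf p) b); split.
  by rewrite /xpj -/n bmx_dg iter_gamma_dg //; apply: prod1_nz.
split; first split.
- exact: prod_iterG.
- by rewrite -iterD em subnKC.
move=> h; apply: F2.
have -> : (n * p.-1).-1 = (j.-1 + mj p j)%N by rewrite em; lia.
by rewrite iterD.
Qed.

Theorem lemma3p7 (p : nat) (hp : prime p) :
  forall j : nat,
    [/\ smodule (Xpj p j),
        has_order (Xpj p j) (p ^ j),
        (forall A : 'M[CC]_p -> Prop, smodule A -> has_order A (p ^ j) ->
           forall d, A d <-> Xpj p j d)
      & (0 < j)%N -> forall d, sgen (xpj p j) d <-> Xpj p j d].
Proof.
move=> j.
have hord : forall k, has_order (Xpj p k) (p ^ k).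
  by move=> k; have [u s m] := Lk_spec k hp; exists (Lk p k); split.
split.
- exact: XF_smodule.
- exact: hord.
- move=> A hA [l [u s hl]].
  have [K hK] : exists K, forall d, A d -> Xpj p K d.
    have [K hK] := @list_level p hp l (fun d hd => inXp_level hp ((proj1 hA) d ((hl d).2 hd))).
    by exists K => d /hl; apply: hK.
  have [K' hK'] := unique_level hp hA hK.
  have eK : (p ^ j)%N = (p ^ K')%N.
    apply: (@has_order_unique _ A (Xpj p K')) => //; first by exists l; split.
  have -> : j = K' by apply: (expnI (prime_gt1 hp)).
  exact: hK'.
- move=> j0 d.
  have [x [ex [hx hne]]] := xpj_level hp j0.
  have ej : j = (j.-1).+1 by rewrite prednK.
  split.
    by move=> hs; apply: hs; [apply: XF_smodule | rewrite ex; apply/Xpj_dg; exists x].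
  move=> /Xpj_dg [b [-> hb]] A hA; rewrite ex => hAx.
  rewrite ej in hx hb.
  exact: (gen hp hx hne (smodule_B hA) hAx).
Qed.
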